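(* Let $G$ be a mixed signed, directed graph. A subset $F\subseteq\mathbb{R}^n$ is a facet of $\mathrm{cone}(\mathcal{P}_G)$ if and only if there exists a facet subgraph $H$ of $G$ such that $\mathrm{cone}(\mathcal{P}_H)=F$.
   Context: A mixed signed, directed graph $G$ on vertex set $\{1,\dots,n\}$ has a set of signed edges $+ij$ or $-ij$ (loops $\pm ii$ allowed) and directed edges $(i,j)$ with $i\ne j$; between a pair of vertices any subset of $+ij,-ij,(i,j),(j,i)$ may occur. Define $\rho(\pm ij)=\pm(e_i+e_j)$ (so $\rho(\pm ii)=\pm2e_i$) and $\rho((i,j))=e_j-e_i$ in $\mathbb{R}^n$; $\mathcal{P}_G=\mathrm{conv}(\rho(E(G)))$, $\mathrm{cone}(\mathcal{P}_G)$ is the set of nonnegative real combinations of its points, and a facet is a proper face of maximal dimension. The augmented signed graph $\widetilde G$ is obtained by replacing each directed edge $(i,j)$ by a new (artificial) vertex $t_{(i,j)}$ and the two signed edges $-i\,t_{(i,j)}$ and $+t_{(i,j)}\,j$. A subgraph $H$ of $G$ has vertex set $\{1,\dots,n\}$ and a subset of the edges of $G$; $G\setminus H$ is the set of edges of $G$ not in $H$; $\widetilde H$ is the augmented graph of $H$ (with artificial vertices only for directed edges of $H$). For a signed graph, a component is a maximal connected subgraph (isolated vertices are components), and it is bipartite if its vertex set can be partitioned into $L,R$ (one possibly empty) with every edge having one endpoint in each (a component with a loop is not bipartite). Components and bipartite components of $G$ (resp. $H$) are those of $\widetilde G$ (resp. $\widetilde H$); $\mathrm{bicomp}(\cdot)$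 counts bipartite components. For a set $S$ of vertices of an augmented graph, $\pi(S)=S\cap\{1,\dots,n\}$. A subgraph $H$ of $G$ is a facet subgraph if (1) $\mathrm{bicomp}(H)=\mathrm{bicomp}(G)+1$, and (2) for any bipartite component $H'$ of $H$ which is not a component of $G$, there is a bipartition $V(\widetilde{H'})=\widetilde L\cup\widetilde R$ such that, with $L=\pi(\widetilde L)$ and $R=\pi(\widetilde R)$, every edge $e\in G\setminus H$ is of one of the forms: a positive edge with at least one endpoint in $L$ and none in $R$; a negative edge with at least one endpoint in $R$ and none in $L$; a directed edge $(i,j)$ with $j\in L$ and $i\notin L$; or a directed edge $(i,j)$ with $i\in R$ and $j\notin R$. *)

(* Defs.v *)
From HB Require Import structures.
From mathcomp Require Import all_boot all_order all_algebra.
Set Implicit Arguments. Unset Strict Implicit. Unset Printing Implicit Defensive.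
Import Order.TTheory GRing.Theory Num.Theory.
Local Open Scope ring_scope.

(* Mixed signed, directed graphs on the vertex set 'I_n = {0,..,n-1}   *)
(* (standing for {1,..,n}).                                            *)
(* An edge is a triple (k, i, j) with                                  *)
(*   k = Some true   : positive signed edge  +ij                       *)
(*   k = Some false  : negative signed edge  -ij                       *)
(*   k = None        : directed edge (i,j)                             *)
(* A graph is a finite set of edges, well formed when signed edges are *)
(* stored with i <= j (so +ij = +ji is a single edge; loops i = j are  *)
(* allowed) and directed edges have i <> j.                            *)

Definition edge (n : nat) := (option bool * 'I_n * 'I_n)%type.

Definition wf_graph n (G : {set edge n}) : bool :=
  [forall e in G,
     let: (k, i, j) := e in
     if k is Some _ then (i <= j)%N else i != j].

(* vertices of the augmented signed graph: original vertices [inl i],  *)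
(* artificial vertices [inr e] (t_e for directed edges e)              *)
Definition AV (n : nat) := ('I_n + edge n)%type.

Section Augmented.
Variable n : nat.
Implicit Types (H : {set edge n}) (u v : AV n) (C L : {set AV n}).

Definition is_directed (e : edge n) : bool := e.1.1 == None.

Definition augV H : {set AV n} :=
  [set v : AV n | if v is inr e then (e \in H) && is_directed e else true].

(* signed edges of the augmented graph contributed by one edge of H:   *)
(* triples (sign, endpoint, endpoint)                                  *)
Definition aug_of (e : edge n) : {set bool * AV n * AV n} :=
  let: (k, i, j) := e in
  match k with
  | Some s => [set (s, inl i, inl j)]
  | None => [set (false, inl i, inr e); (true, inr e, inl j)]
  end.

Definition augE H : {set bool * AV n * AV n} := \bigcup_(e in H) aug_of e.

Definition adj H : rel (AV n) := fun u v =>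
  [exists a in augE H, ((a.1.2 == u) && (a.2 == v)) || ((a.1.2 == v) && (a.2 == u))].

Definition comp H u : {set AV n} := [set v in augV H | connect (adj H) u v].

Definition comps H : {set {set AV n}} := [set comp H u | u in augV H].

Definition edges_at H C : {set bool * AV n * AV n} :=
  [set a in augE H | (a.1.2 \in C) || (a.2 \in C)].

(* L, C :\: L is a bipartition of the component C: every edge has one  *)
(* endpoint in L and the other in C :\: L (a loop is never allowed)    *)
Definition bipartition H C L : bool :=
  (L \subset C) &&
  [forall a in edges_at H C, (a.1.2 \in L) != (a.2 \in L)].

Definition bipartite H C : bool := [exists L : {set AV n}, bipartition H C L].

Definition bicomp H : nat := #|[set C in comps H | bipartite H C]|.

Definition is_comp_of G H C : bool :=
  (C \in comps G) && (edges_at G C == edges_at H C).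

Definition proj C : {set 'I_n} := [set i : 'I_n | inl i \in C].

Definition allowed_edge (L R : {set 'I_n}) (e : edge n) : bool :=
  let: (k, i, j) := e in
  match k with
  | Some true => ((i \in L) || (j \in L)) && (i \notin R) && (j \notin R)
  | Some false => ((i \in R) || (j \in R)) && (i \notin L) && (j \notin L)
  | None => ((j \in L) && (i \notin L)) || ((i \in R) && (j \notin R))
  end.

Definition facet_subgraph (G H : {set edge n}) : bool :=
  [&& H \subset G,
      bicomp H == (bicomp G).+1 &
      [forall C in comps H,
         (bipartite H C && ~~ is_comp_of G H C) ==>
         [exists L : {set AV n},
            bipartition H C L &&
            [forall e in G :\: H, allowed_edge (proj L) (proj (C :\: L)) e]]]].

End Augmented.

(* Geometry in R^n, R an arbitrary real (ordered) field, vectors being *)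
(* row vectors 'rV[R]_n; subsets of R^n are predicates.                *)
Section Geometry.
Variables (R : realFieldType) (n : nat).
Local Notation vec := 'rV[R]_n.

Definition unitv (i : 'I_n) : vec := delta_mx 0 i.

Definition rho (e : edge n) : vec :=
  let: (k, i, j) := e in
  match k with
  | Some true => unitv i + unitv j
  | Some false => - (unitv i + unitv j)
  | None => unitv j - unitv i
  end.

Definition PG (G : {set edge n}) : vec -> Prop := fun x =>
  exists c : edge n -> R,
    [/\ forall e, e \in G -> 0 <= c e,
        \sum_(e in G) c e = 1 &
        x = \sum_(e in G) c e *: rho e].

Definition cone (S : vec -> Prop) : vec -> Prop := fun x =>
  exists s : seq (R * vec),
    (forall p, p \in s -> 0 <= p.1 /\ S p.2) /\
    x = \sum_(p <- s) p.1 *: p.2.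

Definition seteq (A B : vec -> Prop) : Prop := forall x, A x <-> B x.

Definition dot (a x : vec) : R := \sum_(i < n) a 0 i * x 0 i.

Definition face (C F : vec -> Prop) : Prop :=
  (exists x, F x) /\
  exists (a : vec) (b : R),
    (forall x, C x -> dot a x <= b) /\
    (forall x, F x <-> (C x /\ dot a x = b)).

Definition proper_face (C F : vec -> Prop) : Prop := face C F /\ ~ seteq F C.

(* S contains k+1 affinely independent points, i.e. dim aff(S) >= k *)
Definition aff_indep_in (S : vec -> Prop) (k : nat) : Prop :=
  exists (x0 : vec) (s : seq vec),
    [/\ S x0, forall y, y \in s -> S y, size s = k &
        free [seq y - x0 | y <- s]].

(* dim aff(S) <= dim aff(T) *)
Definition dim_le (S T : vec -> Prop) : Prop :=
  forall k, aff_indep_in S k -> aff_indep_in T k.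

(* facet: a proper face of maximal dimension *)
Definition facet (C F : vec -> Prop) : Prop :=
  proper_face C F /\ forall F', proper_face C F' -> dim_le F' F.

End Geometry.

(* Main.v *)
Require Import Defs.
From HB Require Import structures.
From mathcomp Require Import all_boot all_order all_algebra.
From mathcomp Require Import lra zify.
Set Implicit Arguments. Unset Strict Implicit. Unset Printing Implicit Defensive.
Import Order.TTheory GRing.Theory Num.Theory.
Local Open Scope ring_scope.

Section Lin.
Variables (R : realFieldType) (n : nat).
Local Notation vec := 'rV[R]_n.

Lemma dotC (a x : vec) : dot a x = dot x a.
Proof. by rewrite /dot; apply: eq_bigr => i _; rewrite mulrC. Qed.
Lemma dotDr (a x y : vec) : dot a (x + y) = dot a x + dot a y.
Proof. by rewrite /dot -big_split /=; apply: eq_bigr => i _; rewrite mxE mulrDr. Qed.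
Lemma dotZr (a x : vec) c : dot a (c *: x) = c * dot a x.
Proof. by rewrite /dot mulr_sumr; apply: eq_bigr => i _; rewrite mxE mulrCA. Qed.
Lemma dot0r (a : vec) : dot a 0 = 0.
Proof. by rewrite /dot big1 // => i _; rewrite mxE mulr0. Qed.
Lemma dotNr (a x : vec) : dot a (- x) = - dot a x.
Proof. by rewrite -scaleN1r dotZr mulN1r. Qed.
Lemma dotBr (a x y : vec) : dot a (x - y) = dot a x - dot a y.
Proof. by rewrite dotDr dotNr. Qed.
Lemma dot_sumr (a : vec) I (r : seq I) (P : pred I) (F : I -> vec) :
  dot a (\sum_(i <- r | P i) F i) = \sum_(i <- r | P i) dot a (F i).
Proof. by apply: (big_morph _ (dotDr a)); exact: dot0r. Qed.
Lemma dotDl (a b x : vec) : dot (a + b) x = dot a x + dot b x.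
Proof. by rewrite dotC dotDr !(dotC x). Qed.
Lemma dotZl (a x : vec) c : dot (c *: a) x = c * dot a x.
Proof. by rewrite dotC dotZr dotC. Qed.
Lemma dotNl (a x : vec) : dot (- a) x = - dot a x.
Proof. by rewrite dotC dotNr dotC. Qed.
Lemma dot_unitv (a : vec) i : dot a (@unitv R n i) = a 0 i.
Proof.
rewrite /dot (bigD1 i) //= big1 ?addr0 => [|j ji]; rewrite /unitv mxE.
  by rewrite !eqxx mulr1.
by rewrite (negbTE ji) andbF mulr0.
Qed.
Lemma dot_self_eq0 (x : vec) : dot x x = 0 -> x = 0.
Proof.
move=> /eqP; rewrite psumr_eq0 => [/allP H|i _]; last by rewrite -expr2 sqr_ge0.
apply/rowP => i; rewrite mxE; have := H i (mem_index_enum _).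
by rewrite implyTb mulf_eq0 orbb => /eqP.
Qed.

Definition annmx (U : {vspace vec}) : 'M[R]_(n, \dim U) :=
  \matrix_(i, j) (vbasis U)`_j 0 i.
Definition ann (U : {vspace vec}) : {vspace vec} := lker (linfun (@mulmxr _ 1 n _ (annmx U))).

Lemma annP (U : {vspace vec}) (a : vec) : reflect (forall v, v \in U -> dot a v = 0) (a \in ann U).
Proof.
rewrite memv_ker lfunE /=.
have E : forall j, (a *m annmx U) 0 j = dot a (vbasis U)`_j.
  by move=> j; rewrite !mxE; apply: eq_bigr => i _; rewrite mxE.
apply: (iffP eqP) => [H v /coord_vbasis -> | H].
  rewrite dot_sumr big1 // => j _; rewrite dotZr -E H mxE mulr0 //.
apply/rowP => j; rewrite E mxE; apply: H; apply: vbasis_mem; by rewrite mem_nth ?size_tuple.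
Qed.

Lemma dim_ann (U : {vspace vec}) : (\dim (ann U) + \dim U = n)%N.
Proof.
apply/eqP; rewrite eqn_leq; apply/andP; split.
  have := dimv_sum_cap (ann U) U.
  have -> : (ann U :&: U = 0)%VS.
    apply/eqP; rewrite -subv0; apply/subvP => v; rewrite memv_cap => /andP[/annP Hv Uv].
    by rewrite memv0 (dot_self_eq0 (Hv v Uv)).
  rewrite dimv0 addn0 => <-.
  have := dimvS (subvf (ann U + U)%VS); rewrite dimvf /dim /= mul1n //.
have Hn : \dim (fullv : {vspace vec}) = n by rewrite dimvf /dim /= mul1n.
have := limg_ker_dim (linfun (@mulmxr _ 1 n _ (annmx U))) fullv.
rewrite capfv Hn => E; apply: (leq_trans (eq_leq (esym E))).
rewrite leq_add2l; apply: leq_trans (dimvS (subvf _)) _.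
by rewrite dimvf /dim /= mul1n.
Qed.
End Lin.
Section Cone.
Variables (R : realFieldType) (n : nat).
Local Notation vec := 'rV[R]_n.
Local Notation rho := (@rho R n).
Implicit Types (X Y G H : {set edge n}) (a x : vec).

Lemma ann_line a v : (v \in ann <[a]>) = (dot a v == 0).
Proof.
apply/annP/eqP => [H | H w /vlineP [k ->]]; first by rewrite dotC H // memv_line.
by rewrite dotZr dotC H mulr0.
Qed.

Definition VX X : {vspace vec} := <<[seq rho e | e <- enum X]>>%VS.
Definition WX X : {vspace vec} := ann (VX X).

Lemma WXP X a : reflect (forall e, e \in X -> dot a (rho e) = 0) (a \in WX X).
Proof.
apply: (iffP (annP _ _)) => [H e eX | H v Vv].
  by apply: H; apply: memv_span; apply: map_f; rewrite mem_enum.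
apply/eqP; rewrite -ann_line.
have HS : (VX X <= ann <[a]>)%VS.
  by apply/span_subvP => _ /mapP [e eX ->]; rewrite mem_enum in eX; rewrite ann_line H.
exact: (subvP HS _ Vv).
Qed.

Lemma rho_VX X e : e \in X -> rho e \in VX X.
Proof. by move=> eX; apply: memv_span; apply: map_f; rewrite mem_enum. Qed.

Definition coneX X (x : vec) : Prop :=
  exists l : edge n -> R, (forall e, e \in X -> 0 <= l e) /\ x = \sum_(e in X) l e *: rho e.

Lemma coneX0 X : coneX X 0.
Proof. exists (fun _ => 0); split => //; rewrite big1 // => e _; by rewrite scale0r. Qed.

Lemma coneX_rho X e : e \in X -> coneX X (rho e).
Proof.
move=> eX; exists (fun e' => (e' == e)%:R); split => [e' _|]; first by rewrite ler0n.
rewrite (bigD1 e) //= eqxx scale1r big1 ?addr0 // => e' /andP [_ /negbTE ->].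
by rewrite scale0r.
Qed.

Lemma coneX_scale X c x : 0 <= c -> coneX X x -> coneX X (c *: x).
Proof.
move=> c0 [l [l0 ->]]; exists (fun e => c * l e); split => [e eX|].
  by rewrite mulr_ge0 // l0.
by rewrite scaler_sumr; apply: eq_bigr => e _; rewrite scalerA.
Qed.

Lemma coneX_sub X Y x : X \subset Y -> coneX X x -> coneX Y x.
Proof.
move=> XY [l [l0 ->]]; exists (fun e => if e \in X then l e else 0); split.
  by move=> e _; case: ifP => // /l0.
rewrite [RHS](eq_bigr (fun e => if e \in X then l e *: rho e else 0)); last first.
  by move=> e _; case: ifP => //; rewrite scale0r.
rewrite -big_mkcondr /=; apply: eq_bigl => e; apply/idP/idP => [eX|/andP[]//].
by rewrite eX (subsetP XY).
Qed.

Lemma coneX_V X x : coneX X x -> x \in VX X.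
Proof. by move=> [l [_ ->]]; apply: memv_suml => e eX; rewrite memvZ ?rho_VX. Qed.

Lemma cone_PG X x : cone (PG X) x <-> coneX X x.
Proof.
split.
  move=> [s [Hs ->]]; elim: s Hs => [|[c y] s IH] Hs; first by rewrite big_nil; exact: coneX0.
  rewrite big_cons /=.
  have [/= c0 [d [d0 _ Ey]]] := Hs _ (mem_head _ _); rewrite Ey.
  have [l [l0 ->]] := IH (fun p ps => Hs p (@mem_behead _ ((c, y) :: s) p ps)).
  exists (fun e => c * d e + l e); split => [e eX|].
    by rewrite addr_ge0 ?mulr_ge0 ?d0 ?l0.
  rewrite scaler_sumr -big_split /=; apply: eq_bigr => e _.
  by rewrite scalerDl scalerA.
move=> [l [l0 ->]]; exists [seq (l e, rho e) | e <- enum X]; split.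
  move=> _ /mapP [e eX ->]; rewrite mem_enum in eX; split; first exact: l0.
  exists (fun e' => (e' == e)%:R); split => [e' _||]; first by rewrite ler0n.
    by rewrite (bigD1 e) //= eqxx big1 ?addr0 // => e' /andP [_ /negbTE ->].
  rewrite (bigD1 e) //= eqxx scale1r big1 ?addr0 // => e' /andP [_ /negbTE ->].
  by rewrite scale0r.
by rewrite big_map big_enum.
Qed.

Lemma dot_coneX a X l :
  dot a (\sum_(e in X) l e *: rho e) = \sum_(e in X) l e * dot a (rho e).
Proof. by rewrite dot_sumr; apply: eq_bigr => e _; rewrite dotZr. Qed.

Definition zs G a := [set e in G | dot a (rho e) == 0].

Lemma zs_sub G a : zs G a \subset G.
Proof. by apply/subsetP => e; rewrite inE => /andP[]. Qed.

Lemma coneX_zs G a : (forall e, e \in G -> dot a (rho e) <= 0) ->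
  forall x, (coneX G x /\ dot a x = 0) <-> coneX (zs G a) x.
Proof.
move=> va x; split.
  move=> [[l [l0 Ex]] ax]; rewrite Ex dot_coneX in ax.
  have H0 : forall e, e \in G -> l e * dot a (rho e) = 0.
    move=> e eG; apply/eqP; rewrite -oppr_eq0; apply/eqP.
    apply: (@psumr_eq0P _ _ (fun e => e \in G) (fun e => - (l e * dot a (rho e)))) => //.
      by move=> e' e'G; rewrite oppr_ge0 mulr_ge0_le0 ?l0 ?va.
    by rewrite sumrN ax oppr0.
  exists l; split => [e|]; first by rewrite inE => /andP[/l0].
  rewrite Ex (bigID (fun e => dot a (rho e) == 0)) /= [X in _ + X]big1 ?addr0.
    by apply: eq_bigl => e; rewrite inE.
  move=> e /andP [eG ne]; have := H0 e eG.
  by move/eqP; rewrite mulf_eq0 (negbTE ne) orbF => /eqP ->; rewrite scale0r.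
move=> Hx; split; first exact: coneX_sub (zs_sub G a) Hx.
move: Hx => [l [_ ->]]; rewrite dot_coneX big1 // => e; rewrite inE => /andP[_ /eqP->].
by rewrite mulr0.
Qed.

Lemma face_zs G a : (forall e, e \in G -> dot a (rho e) <= 0) ->
  face (cone (PG G)) (coneX (zs G a)).
Proof.
move=> va; split; first by exists 0; exact: coneX0.
exists a, 0; split.
  move=> x /cone_PG [l [l0 ->]]; rewrite dot_coneX; apply: sumr_le0 => e eG.
  by rewrite mulr_ge0_le0 ?l0 ?va.
move=> x; split => [/(coneX_zs va x).2 [Cx ax] | [Cx ax]]; first by split => //; exact/cone_PG.
by apply/(coneX_zs va x).1; split => //; exact/cone_PG.
Qed.

Lemma zs_face G F : face (cone (PG G)) F ->
  exists a, (forall e, e \in G -> dot a (rho e) <= 0) /\ seteq F (coneX (zs G a)).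
Proof.
move=> [[x0 Fx0] [a [b [va EF]]]].
have b0 : 0 <= b.
  by have := va 0; rewrite dot0r; apply; apply/cone_PG; exact: coneX0.
have [Cx0 ax0] := (EF x0).1 Fx0.
have bb : 2 * b <= b.
  have := va (2 *: x0); rewrite dotZr ax0; apply; apply/cone_PG.
  by apply: coneX_scale => //; exact/cone_PG.
have b0' : b = 0 by lra.
rewrite b0' in va EF.
have va' : forall e, e \in G -> dot a (rho e) <= 0.
  by move=> e eG; apply: va; apply/cone_PG; exact: coneX_rho.
exists a; split => // x; rewrite EF.
split => [[Cx ax] | /(coneX_zs va' x).2 [Cx ax]]; last by split => //; exact/cone_PG.
by apply/(coneX_zs va' x).1; split => //; exact/cone_PG.
Qed.

Lemma proper_zs G a : (forall e, e \in G -> dot a (rho e) <= 0) ->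
  proper_face (cone (PG G)) (coneX (zs G a)) <-> exists2 e, e \in G & dot a (rho e) < 0.
Proof.
move=> va; split.
  move=> [_ NE]; case: (boolP [exists e in G, dot a (rho e) != 0]).
    move=> /existsP [e /andP [eG ne]]; exists e => //; by rewrite lt_neqAle ne va.
  move=> /existsPn H; exfalso; apply: NE => x; rewrite cone_PG.
  suff -> : zs G a = G by [].
  apply/setP => e; rewrite inE; case: (boolP (e \in G)) => //= eG.
  by have := H e; rewrite eG /= negbK.
move=> [e eG lt]; split; first exact: face_zs.
move=> /(_ (rho e)) [_ /(_ (proj2 (cone_PG _ _) (coneX_rho eG)))].
move=> /(coneX_zs va (rho e)).2 [_ E]; by rewrite E ltxx in lt.
Qed.
End Cone.
Section Dim.
Variables (R : realFieldType) (n : nat).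
Local Notation vec := 'rV[R]_n.
Local Notation rho := (@rho R n).
Local Notation VX := (@VX R n).
Local Notation WX := (@WX R n).
Local Notation coneX := (@coneX R n).

Lemma extract_basis (s : seq vec) :
  exists t, [/\ {subset t <= s}, free t & (<<t>> = <<s>>)%VS].
Proof.
elim: s => [|v s [t [ts ft st]]]; first by exists [::]; split => //; exact: nil_free.
case: (boolP (v \in <<t>>%VS)) => vt.
  exists t; split => //; first by move=> x /ts xs; rewrite inE xs orbT.
  by rewrite span_cons -st; apply/esym/addv_idPr; rewrite -memvE.
exists (v :: t); split.
- by move=> x; rewrite !inE => /orP [->|/ts ->] //; rewrite orbT.
- by rewrite free_cons vt.
by rewrite !span_cons st.
Qed.

Lemma free_dim (t : seq vec) (U : {vspace vec}) :
  free t -> (<<t>> <= U)%VS -> (size t <= \dim U)%N.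
Proof. by move=> /eqP <- /dimvS. Qed.

Lemma aff_seteq (S T : vec -> Prop) k : seteq S T -> aff_indep_in S k -> aff_indep_in T k.
Proof.
move=> ST [x0 [s [Sx0 Ss sz fr]]]; exists x0, s; split => //; first exact/ST.
by move=> y /Ss /ST.
Qed.

Lemma aff_coneX (X : {set edge n}) k : aff_indep_in (coneX X) k <-> (k <= \dim (VX X))%N.
Proof.
split.
  move=> [x0 [s [Cx0 Cs <- fr]]].
  rewrite -(size_map (fun y => y - x0)); apply: free_dim fr _.
  apply/span_subvP => _ /mapP [y ys ->]; apply: memvB; apply: coneX_V => //.
  exact: Cs.
move=> kd; have [t [ts ft st]] := extract_basis [seq rho e | e <- enum X].
have szt : size t = \dim (VX X) by rewrite /VX -st; exact/esym/eqP.
exists 0, (take k t); split.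
- exact: coneX0.
- move=> y /mem_take /ts /mapP [e eX ->]; rewrite mem_enum in eX; exact: coneX_rho.
- by rewrite size_takel // szt.
rewrite (eq_map (fun y => subr0 y)) map_id.
by apply: (@catl_free _ _ (drop k t)); rewrite cat_take_drop.
Qed.
End Dim.
Section Graph.
Variable n : nat.
Implicit Types (X Y G H : {set edge n}) (u v w : AV n) (C D L : {set AV n}).

Lemma augV_inl X i : inl i \in augV X.
Proof. by rewrite /augV in_set. Qed.
Lemma augV_inr X e : (inr e \in augV X) = (e \in X) && is_directed e.
Proof. by rewrite /augV in_set. Qed.

Lemma augEP X t : reflect (exists2 e, e \in X & t \in aug_of e) (t \in augE X).
Proof. exact: bigcupP. Qed.

Lemma aug_ofV X e t : e \in X -> t \in aug_of e -> (t.1.2 \in augV X) && (t.2 \in augV X).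
Proof.
move=> eX; case: e eX => [[[s|] i] j] eX; rewrite /aug_of.
  by rewrite inE => /eqP -> /=; rewrite !augV_inl.
by rewrite !inE => /orP [] /eqP -> /=; rewrite eX.
Qed.

Lemma augEV X t : t \in augE X -> (t.1.2 \in augV X) && (t.2 \in augV X).
Proof. by move=> /augEP [e eX te]; exact: aug_ofV te. Qed.

Lemma adj_sym X : symmetric (adj X).
Proof.
move=> u v; apply/existsP/existsP => [] [t /andP [tE H]]; exists t;
  by rewrite tE /= orbC.
Qed.

Lemma adjP X u v : reflect (exists2 t, t \in augE X &
   ((t.1.2 == u) && (t.2 == v)) || ((t.1.2 == v) && (t.2 == u))) (adj X u v).
Proof.
apply: (iffP existsP) => [[t /andP [tE H]]|[t tE H]]; exists t => //.
by rewrite tE.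
Qed.

Lemma adjV X u v : adj X u v -> v \in augV X.
Proof.
move=> /adjP [t /augEV /andP [H1 H2] /orP [] /andP [/eqP E1 /eqP E2]].
  by rewrite -E2.
by rewrite -E1.
Qed.

Lemma connect_sym_adj X : connect_sym (adj X).
Proof. exact: sym_connect_sym (adj_sym X). Qed.

Lemma compE X u v : (v \in Defs.comp X u) = (v \in augV X) && connect (adj X) u v.
Proof. by rewrite /Defs.comp in_set. Qed.

Lemma comp_closed X u v w : v \in Defs.comp X u -> adj X v w -> w \in Defs.comp X u.
Proof.
rewrite !compE => /andP [_ uv] vw; rewrite (adjV vw) /=.
exact: connect_trans uv (connect1 vw).
Qed.

Lemma comp_self X u : u \in augV X -> u \in Defs.comp X u.
Proof. by move=> uV; rewrite compE uV connect0. Qed.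

Lemma comp_eq X u v : v \in Defs.comp X u -> Defs.comp X v = Defs.comp X u.
Proof.
rewrite compE => /andP [_ uv]; apply/setP => w; rewrite !compE.
case: (w \in augV X) => //=.
have vu : connect (adj X) v u by rewrite connect_sym_adj.
apply/idP/idP => [vw|uw]; first exact: connect_trans uv vw.
exact: connect_trans vu uw.
Qed.

Lemma compsP X C : reflect (exists2 u, u \in augV X & C = Defs.comp X u) (C \in comps X).
Proof. exact: imsetP. Qed.

Lemma comps_sub X C v : C \in comps X -> v \in C -> v \in augV X.
Proof. by move=> /compsP [u _ ->]; rewrite compE => /andP []. Qed.

Lemma comps_closed X C v w : C \in comps X -> v \in C -> adj X v w -> w \in C.
Proof. by move=> /compsP [u _ ->]; exact: comp_closed. Qed.

Lemma comps_eq X C v : C \in comps X -> v \in C -> C = Defs.comp X v.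
Proof. by move=> /compsP [u _ ->] /comp_eq ->. Qed.

Lemma comps_disj X C D v : C \in comps X -> D \in comps X -> v \in C -> v \in D -> C = D.
Proof. by move=> CX DX vC vD; rewrite (comps_eq CX vC) (comps_eq DX vD). Qed.

Lemma comp_in_comps X v : v \in augV X -> Defs.comp X v \in comps X.
Proof. by move=> vV; apply/compsP; exists v. Qed.

Lemma edge_in_comp X C t : C \in comps X -> t \in augE X ->
  (t.1.2 \in C) || (t.2 \in C) -> (t.1.2 \in C) && (t.2 \in C).
Proof.
move=> CX tE /orP [h|h].
  rewrite h /=; apply: comps_closed CX h _; apply/adjP; exists t => //.
  by rewrite !eqxx.
rewrite h andbT; apply: comps_closed CX h _; apply/adjP; exists t => //.
by rewrite !eqxx orbT.
Qed.

Lemma comps_orig X C : C \in comps X -> exists i, inl i \in C.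
Proof.
move=> CX; have [u uV Cu] := compsP _ _ CX.
have uC : u \in C by rewrite Cu comp_self.
case: u uV uC {Cu} => [i|e] uV uC; first by exists i.
move: uV; rewrite augV_inr => /andP [eX de].
exists e.1.2; apply: comps_closed CX uC _; apply/adjP.
exists (false, inl e.1.2, inr e).
  apply/augEP; exists e => //; case: e eX de => [[[s|] i] j] _ //= _.
  by rewrite !inE eqxx.
by rewrite !eqxx orbT.
Qed.

Lemma comp_const X C (T : eqType) (f : AV n -> T) :
  C \in comps X -> (forall x y, x \in C -> adj X x y -> f y = f x) ->
  forall v w, v \in C -> w \in C -> f v = f w.
Proof.
move=> CX Hf.
have [u uV Cu] := compsP _ _ CX.
suff K : forall v, v \in C -> f v = f u.
  by move=> v w vC wC; rewrite (K v vC) (K w wC).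
move=> v vC; have := vC; rewrite Cu compE => /andP [_ /connectP [p pth ->]].
have uC : u \in C by rewrite Cu comp_self.
elim: p u pth uC {Cu uV vC} => [|y p IH] x //= /andP [xy pth] xC.
have yC := comps_closed CX xC xy.
by rewrite (IH y pth yC) (Hf x y xC xy).
Qed.

Lemma bipartition_swap X C L : C \in comps X -> bipartition X C L -> bipartition X C (C :\: L).
Proof.
move=> CX /andP [LC /forallP H]; apply/andP; split; first exact: subsetDl.
apply/forallP => t; apply/implyP => tE; have := H t; rewrite tE /=.
move: tE; rewrite inE => /andP [tE /(edge_in_comp CX tE) /andP [h1 h2]].
by rewrite !inE h1 h2 !andbT; case: (t.1.2 \in L); case: (t.2 \in L).
Qed.

Lemma bipartite_edges G H C : edges_at G C = edges_at H C -> bipartite H C -> bipartite G C.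
Proof. by move=> E /existsP [L HL]; apply/existsP; exists L; rewrite /bipartition E. Qed.

End Graph.
Section W.
Variables (R : realFieldType) (n : nat).
Local Notation vec := 'rV[R]_n.
Local Notation rho := (@rho R n).
Local Notation VX := (@VX R n).
Local Notation WX := (@WX R n).
Implicit Types (X Y G H : {set edge n}) (u v w : AV n) (C D L : {set AV n}) (a : vec).

Definition ext a (v : AV n) : R :=
  match v with inl i => a 0 i | inr e => - a 0 e.1.2 end.

Lemma dot_rho a (e : edge n) : dot a (rho e) =
  match e.1.1 with
  | Some true => a 0 e.1.2 + a 0 e.2
  | Some false => - (a 0 e.1.2 + a 0 e.2)
  | None => a 0 e.2 - a 0 e.1.2 end.
Proof.
case: e => [[[[]|] i] j] /=.
- by rewrite dotDr !dot_unitv.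
- by rewrite dotNr dotDr !dot_unitv.
by rewrite dotBr !dot_unitv.
Qed.

Lemma ext_edge X a t : a \in WX X -> t \in augE X -> ext a t.1.2 + ext a t.2 = 0.
Proof.
move=> /WXP aW /augEP [e eX te]; have := aW e eX; rewrite dot_rho.
case: e eX te => [[[[]|] i] j] eX /=.
- by rewrite inE => /eqP -> /=.
- by rewrite inE => /eqP -> /= /eqP; rewrite oppr_eq0 => /eqP.
rewrite !inE => /orP [] /eqP -> /= E.
  by rewrite subrr.
by rewrite addrC.
Qed.

Lemma W_of_g X (g : AV n -> R) :
  (forall t, t \in augE X -> g t.1.2 + g t.2 = 0) -> \row_i g (inl i) \in WX X.
Proof.
move=> Hg; apply/WXP => e eX; rewrite dot_rho !mxE.
case: e eX => [[[[]|] i] j] eX /=.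
- by have := Hg (true, inl i, inl j); apply; apply/augEP; exists (Some true, i, j) => //; rewrite inE.
- have -> := Hg (false, inl i, inl j); first by rewrite oppr0.
  by apply/augEP; exists (Some false, i, j) => //; rewrite inE.
have h1 := Hg (false, inl i, inr (None, i, j)).
have h2 := Hg (true, inr (None, i, j), inl j).
have E1 : g (inl i) + g (inr (None, i, j)) = 0.
  by apply: h1; apply/augEP; exists (None, i, j) => //; rewrite !inE eqxx.
have E2 : g (inr (None, i, j)) + g (inl j) = 0.
  by apply: h2; apply/augEP; exists (None, i, j) => //; rewrite !inE eqxx orbT.
lra.
Qed.
End W.
Section Basis.
Variables (R : realFieldType) (n : nat).
Local Notation vec := 'rV[R]_n.
Local Notation rho := (@rho R n).
Local Notation VX := (@VX R n).
Local Notation WX := (@WX R n).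
Local Notation ext := (@ext R n).
Implicit Types (X Y G H : {set edge n}) (u v w x y : AV n) (C D L : {set AV n}) (a : vec).

Definition sigma L v : R := if v \in L then -1 else 1.

Definition vec_of (PL PR : {set 'I_n}) : vec :=
  \row_i (if i \in PR then 1 else if i \in PL then -1 else 0).

Definition sgv C L : vec := vec_of (proj L) (proj (C :\: L)).

Lemma adj_ext X a x y : a \in WX X -> adj X x y -> ext a x + ext a y = 0.
Proof.
move=> aW /adjP [t tE /orP [] /andP [/eqP E1 /eqP E2]]; have := ext_edge aW tE.
  by rewrite E1 E2.
by rewrite E1 E2 addrC.
Qed.

Lemma adj_bip X C L x y : C \in comps X -> bipartition X C L -> x \in C -> adj X x y ->
  (x \in L) != (y \in L).
Proof.
move=> CX /andP [_ /forallP HL] xC /adjP [t tE H].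
have tC : t \in edges_at X C.
  by rewrite inE tE /=; case/orP: H => /andP [/eqP -> /eqP ->]; rewrite xC ?orbT.
have := HL t; rewrite tC /=.
by case/orP: H => /andP [/eqP -> /eqP ->] //; rewrite eq_sym.
Qed.

Lemma const_on_comp X a C L : a \in WX X -> C \in comps X -> bipartition X C L ->
  forall v w, v \in C -> w \in C -> ext a v * sigma L v = ext a w * sigma L w.
Proof.
move=> aW CX bL; apply: (comp_const (X := X) (f := fun v => ext a v * sigma L v)) => // x y xC xy.
have E := adj_ext aW xy; have B := adj_bip CX bL xC xy.
have -> : ext a y = - ext a x by lra.
rewrite /sigma; move: B; case: (x \in L); case: (y \in L) => //= _; lra.
Qed.

Lemma neq_opp (z : R) : z != 0 -> z != - z.
Proof. by move=> nz; apply/eqP => E; move/eqP: nz; apply; lra. Qed.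

Lemma nonbip_zero X a C : a \in WX X -> C \in comps X -> ~~ bipartite X C ->
  forall v, v \in C -> ext a v = 0.
Proof.
move=> aW CX nb v vC; apply/eqP; apply/negPn/negP => nz.
set z := ext a v in nz.
have K : forall w w', w \in C -> w' \in C -> ext a w ^+ 2 = ext a w' ^+ 2.
  apply: (comp_const (X := X) (f := fun w => ext a w ^+ 2)) => // x y xC xy.
  have E := adj_ext aW xy.
  have -> : ext a y = - ext a x by lra.
  by rewrite sqrrN.
have sq : forall w, w \in C -> ext a w ^+ 2 = z ^+ 2.
  move=> w wC; exact (K w v wC vC).
have pm : forall w, w \in C -> (ext a w == z) || (ext a w == - z).
  by move=> w wC; rewrite -eqf_sqr sq.
move/negP: nb; apply; apply/existsP; exists [set w in C | ext a w != z].
apply/andP; split; first by apply/subsetP => w; rewrite inE => /andP [].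
apply/forallP => t; apply/implyP; rewrite inE => /andP [tE tC].
have /andP [h1 h2] := edge_in_comp CX tE tC.
have E := ext_edge aW tE.
rewrite !inE h1 h2 /=.
have zz := neq_opp nz.
case/orP: (pm _ h1) => /eqP e1.
  have e2 : ext a t.2 = - z by lra.
  have f1 : (ext a t.1.2 != z) = false by rewrite e1 eqxx.
  have f2 : (ext a t.2 != z) = true by rewrite e2 eq_sym zz.
  by rewrite f1 f2.
have e2 : ext a t.2 = z by lra.
have f1 : (ext a t.1.2 != z) = true by rewrite e1 eq_sym zz.
have f2 : (ext a t.2 != z) = false by rewrite e2 eqxx.
by rewrite f1 f2.
Qed.

Lemma sgvE C L i : (sgv C L) 0 i =
  if inl i \in C :\: L then 1 else if inl i \in L then -1 else 0.
Proof. by rewrite /sgv /vec_of mxE /proj !in_set. Qed.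

Lemma sgv_W X C L : C \in comps X -> bipartition X C L -> sgv C L \in WX X.
Proof.
move=> CX bL.
pose g := fun v => if v \in C :\: L then 1 else if v \in L then -1 else 0 : R.
have -> : sgv C L = \row_i g (inl i).
  by apply/rowP => i; rewrite sgvE mxE.
apply: (W_of_g (g := g)) => t tE; rewrite /g.
move: (bL) => /andP [LC /forallP HL].
case: (boolP ((t.1.2 \in C) || (t.2 \in C))) => tC.
  have /andP [h1 h2] := edge_in_comp CX tE tC.
  have := HL t; rewrite inE tE tC /= !inE h1 h2 !andbT.
  by case: (t.1.2 \in L); case: (t.2 \in L) => //= _; lra.
move: tC; rewrite negb_or => /andP [h1 h2].
have n1 : t.1.2 \notin L by apply: contra h1; apply: (subsetP LC).
have n2 : t.2 \notin L by apply: contra h2; apply: (subsetP LC).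
by rewrite !inE (negbTE h1) (negbTE h2) (negbTE n1) (negbTE n2) /= addr0.
Qed.

Definition BC X := [set C in comps X | bipartite X C].
Definition pickL X C := if [pick L | bipartition X C L] is Some L then L else set0.

Lemma pickL_P X C : C \in BC X -> bipartition X C (pickL X C).
Proof.
rewrite inE => /andP [_ /existsP [L HL]]; rewrite /pickL.
by case: pickP => [L' //|/(_ L)]; rewrite HL.
Qed.

Definition bvec X C := sgv C (pickL X C).
Definition bas X := [seq bvec X C | C <- enum (BC X)].

Lemma sgv_in C L i : L \subset C -> inl i \in C -> (sgv C L) 0 i = sigma L (inl i).
Proof. by move=> LC iC; rewrite sgvE /sigma inE iC andbT; case: (inl i \in L). Qed.

Lemma sgv_out C L i : L \subset C -> inl i \notin C -> (sgv C L) 0 i = 0.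
Proof.
move=> LC iC; rewrite sgvE inE (negbTE iC) andbF.
by have -> : (inl i \in L) = false by apply/negbTE; apply: contra iC; apply: (subsetP LC).
Qed.

Lemma pickL_sub X C : C \in BC X -> pickL X C \subset C.
Proof. by move=> /pickL_P /andP []. Qed.

Lemma WX_span X : (WX X <= <<bas X>>)%VS.
Proof.
apply/subvP => a aW.
pose kap C := if [pick v in C] is Some r then ext a r * sigma (pickL X C) r else 0.
suff -> : a = \sum_(C in BC X) kap C *: bvec X C.
  apply: memv_suml => C CB; apply: memvZ; apply: memv_span.
  by apply: map_f; rewrite mem_enum.
apply/rowP => i; rewrite summxE.
have iV : inl i \in augV X by exact: augV_inl.
set C0 := Defs.comp X (inl i).
have C0X : C0 \in comps X by exact: comp_in_comps.
have iC0 : inl i \in C0 by exact: comp_self.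
have other : forall C, C \in BC X -> C != C0 -> (kap C *: bvec X C) 0 i = 0.
  move=> C CB nC; rewrite mxE /bvec sgv_out ?mulr0 ?pickL_sub //.
  have CX : C \in comps X by move: CB; rewrite inE => /andP [].
  by apply: contra nC => iC; apply/eqP; exact: comps_disj CX C0X iC iC0.
case: (boolP (C0 \in BC X)) => C0B.
  rewrite (bigD1 C0) //= big1 ?addr0; last by move=> C /andP [CB nC]; exact: other.
  rewrite mxE /bvec sgv_in ?pickL_sub // /kap.
  case: pickP => [r rC0|/(_ (inl i))]; last by rewrite iC0.
  rewrite (const_on_comp (L := pickL X C0) _ C0X _ rC0 iC0) //; last exact: pickL_P.
  by rewrite /= /sigma; case: (inl i \in pickL X C0); lra.
rewrite big1; last first.
  move=> C CB; apply: other => //; apply: contraNneq C0B => <- //.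
have := nonbip_zero aW C0X _ iC0.
by rewrite /= => -> //; apply: contra C0B => bC; rewrite inE C0X.
Qed.

Lemma bas_free X : free (bas X).
Proof.
rewrite /bas.
have : uniq (enum (BC X)) by exact: enum_uniq.
have : {subset enum (BC X) <= BC X} by move=> C; rewrite mem_enum.
elim: (enum (BC X)) => [|C cs IH] sub uq; first exact: nil_free.
move: uq => /= /andP [Ccs uq].
rewrite free_cons IH ?andbT //; last by move=> D Dcs; apply: sub; rewrite inE Dcs orbT.
have CB : C \in BC X by apply: sub; rewrite inE eqxx.
have CX : C \in comps X by move: CB; rewrite inE => /andP [].
have [i iC] := comps_orig CX.
have HS : (<<[seq bvec X D | D <- cs]>> <= ann <[@unitv R n i]>)%VS.
  apply/span_subvP => _ /mapP [D Dcs ->]; rewrite ann_line dotC dot_unitv.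
  have DB : D \in BC X by apply: sub; rewrite inE Dcs orbT.
  rewrite sgv_out ?pickL_sub //; apply/negP => iD.
  have DX : D \in comps X by move: DB; rewrite inE => /andP [].
  by move: Ccs; rewrite (comps_disj CX DX iC iD) Dcs.
apply/negP => /(subvP HS); rewrite ann_line dotC dot_unitv sgv_in ?pickL_sub //.
by rewrite /sigma; case: (inl i \in pickL X C) => /eqP; lra.
Qed.

Lemma dim_WX X : \dim (WX X) = bicomp X.
Proof.
have E : <<bas X>>%VS = WX X.
  apply/eqP; rewrite eqEsubv WX_span andbT.
  apply/span_subvP => _ /mapP [C CB ->]; rewrite mem_enum in CB.
  apply: sgv_W; last exact: pickL_P.
  by move: CB; rewrite inE => /andP [].
rewrite -E; move/eqP: (bas_free X) => ->.
by rewrite size_map -cardE.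
Qed.
End Basis.
Section Misc.
Variables (R : realFieldType) (n : nat).
Local Notation vec := 'rV[R]_n.
Local Notation rho := (@rho R n).
Local Notation VX := (@VX R n).
Local Notation WX := (@WX R n).
Local Notation coneX := (@coneX R n).
Local Notation vec_of := (@vec_of R n).

Lemma allowed_dot (PL PR : {set 'I_n}) (e : edge n) : [disjoint PL & PR] ->
  allowed_edge PL PR e = (dot (vec_of PL PR) (rho e) < 0).
Proof.
move=> dj; rewrite dot_rho !mxE.
case: e => [[k i] j] /=.
case iR: (i \in PR); case iL: (i \in PL); case jR: (j \in PR); case jL: (j \in PL);
  try (by have := disjointFr dj iL; rewrite iR);
  try (by have := disjointFr dj jL; rewrite jR);
  case: k => [[]|] /=; apply/idP/idP => H //; try lra; exfalso; lra.
Qed.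

Lemma exists_min (T : finType) (P : pred T) (f : T -> R) x0 : P x0 ->
  exists2 y, P y & forall z, P z -> f y <= f z.
Proof. by move=> Px0; case: (arg_minP f Px0) => y Py H; exists y. Qed.

Lemma face_seteq (C F F' : vec -> Prop) : seteq F F' -> face C F -> face C F'.
Proof.
move=> E [[x Fx] [a [b [va EF]]]]; split; first by exists x; apply/E.
by exists a, b; split => // y; rewrite -E.
Qed.

Lemma proper_seteq (C F F' : vec -> Prop) : seteq F F' -> proper_face C F -> proper_face C F'.
Proof.
move=> E [fF NE]; split; first exact: face_seteq fF.
by move=> E'; apply: NE => x; rewrite E.
Qed.

Lemma seteq_sym (F F' : vec -> Prop) : seteq F F' -> seteq F' F.
Proof. by move=> E x; rewrite E. Qed.

Lemma seteq_trans (F F' F'' : vec -> Prop) : seteq F F' -> seteq F' F'' -> seteq F F''.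
Proof. by move=> E E' x; rewrite E E'. Qed.

Lemma cone_coneX (X : {set edge n}) : seteq (cone (PG X)) (coneX X).
Proof. by move=> x; exact: cone_PG. Qed.

Lemma WX_sub (X Y : {set edge n}) : X \subset Y -> (WX Y <= WX X)%VS.
Proof.
move=> XY; apply/subvP => a /WXP H; apply/WXP => e eX; apply: H.
exact: (subsetP XY).
Qed.

Lemma VX_sub (X Y : {set edge n}) : X \subset Y -> (VX X <= VX Y)%VS.
Proof.
move=> XY; apply/span_subvP => _ /mapP [e eX ->]; apply: rho_VX.
by rewrite mem_enum in eX; exact: (subsetP XY).
Qed.

Lemma dim_lt (U V : {vspace vec}) u : (U <= V)%VS -> u \in V -> u \notin U -> (\dim U < \dim V)%N.
Proof.
move=> UV uV uU; rewrite (ltn_leqif (dimv_leqif_eq UV)).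
by apply: contra uU => /eqP ->.
Qed.

Lemma dimVW (X : {set edge n}) : (\dim (VX X) = n - bicomp X)%N.
Proof.
have E := dim_ann (VX X); have E2 := dim_WX R X; rewrite /WX in E2.
lia.
Qed.

Lemma dim_addline (U : {vspace vec}) a : (\dim (U + <[a]>) <= (\dim U).+1)%N.
Proof.
have := dimv_sum_cap U <[a]>; rewrite dim_vline => E.
have := leq_b1 (a != 0); lia.
Qed.

Lemma connect_closed (T : finType) (e : rel T) (S : pred T) x y :
  (forall u v, S u -> e u v -> S v) -> S x -> connect e x y -> S y.
Proof.
move=> H Sx /connectP [p pth ->]; elim: p x pth Sx => [|z p IH] x //= /andP [xz pth] Sx.
exact: IH pth (H _ _ Sx xz).
Qed.

End Misc.
Section Main.
Variables (R : realFieldType) (n : nat).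
Local Notation vec := 'rV[R]_n.
Local Notation rho := (@rho R n).
Local Notation VX := (@VX R n).
Local Notation WX := (@WX R n).
Local Notation coneX := (@coneX R n).
Local Notation vec_of := (@vec_of R n).
Local Notation sgv := (@sgv R n).
Local Notation zs := (@zs R n).
Implicit Types (X Y G H : {set edge n}) (u v w x y : AV n) (C D L : {set AV n}) (a b : vec).

Lemma disj_proj C L : [disjoint proj L & proj (C :\: L)].
Proof.
apply/pred0P => i /=; rewrite /proj !in_set.
by case: (inl i \in L).
Qed.

Lemma maxdim G a' H : (forall e, e \in G -> dot a' (rho e) <= 0) ->
  (exists2 e, e \in G & dot a' (rho e) < 0) ->
  (\dim (WX H) <= (bicomp G).+1)%N ->
  forall k, aff_indep_in (coneX (zs G a')) k -> aff_indep_in (coneX H) k.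
Proof.
move=> va [e0 e0G lt0] dH k /aff_coneX hk; apply/aff_coneX.
apply: leq_trans hk _; rewrite !dimVW.
have hW : (bicomp G < bicomp (zs G a'))%N.
  rewrite -!(dim_WX R); apply: (dim_lt (u := a')).
  - exact: WX_sub (zs_sub G a').
  - by apply/WXP => e; rewrite inE => /andP [_ /eqP].
  - by apply/WXP => /(_ e0 e0G) E; rewrite E ltxx in lt0.
rewrite -(dim_WX R) in hW dH *.
have := dim_WX R H; lia.
Qed.

Lemma facet_of_subgraph G H (F : vec -> Prop) : facet_subgraph G H -> seteq (cone (PG H)) F ->
  facet (cone (PG G)) F.
Proof.
move=> /and3P [HG /eqP bH /forallP cond] EF.
case: (boolP [exists C0, [&& C0 \in comps H, bipartite H C0 & ~~ is_comp_of G H C0]]);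
    last first.
  move=> /existsPn NE.
  have : (bicomp H <= bicomp G)%N.
    apply: subset_leq_card; apply/subsetP => C; rewrite !inE => /andP [CH bC].
    have := NE C; rewrite CH bC /= negbK => /andP [CG /eqP E].
    by rewrite CG /=; apply: bipartite_edges E bC.
  by rewrite bH ltnn.
move=> /existsP [C0 /and3P [C0H bC0 nC0]].
have := cond C0; rewrite C0H bC0 nC0 /= => /existsP [L /andP [bL /forallP aL]].
set a := sgv C0 L.
have aW : a \in WX H by apply: sgv_W.
have neg : forall e, e \in G -> e \notin H -> dot a (rho e) < 0.
  move=> e eG eH; have := aL e; rewrite inE eH eG /=.
  by rewrite (allowed_dot R) ?disj_proj.
have va : forall e, e \in G -> dot a (rho e) <= 0.
  move=> e eG; case: (boolP (e \in H)) => eH; last by rewrite ltW ?neg.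
  by rewrite (WXP _ _ aW e eH).
have zH : zs G a = H.
  apply/setP => e; rewrite inE; case: (boolP (e \in H)) => eH.
    by rewrite (subsetP HG e eH) (WXP _ _ aW e eH) eqxx.
  case: (boolP (e \in G)) => //= eG; by rewrite lt_eqF ?neg.
have EF' : seteq (coneX (zs G a)) F.
  by rewrite zH; apply: seteq_trans (seteq_sym (cone_coneX H)) EF.
case: (boolP [exists e in G, e \notin H]); last first.
  move=> /exists_inPn NE.
  have GH : G = H.
    apply/eqP; rewrite eqEsubset HG andbT; apply/subsetP => e eG.
    by move: (NE e eG); rewrite negbK.
  by move: bH; rewrite GH => /eqP; rewrite -addn1 -[X in X == _]addn0 eqn_add2l.
move=> /exists_inP [e0 e0G e0H].
split.
  apply: proper_seteq EF' _; apply/proper_zs => //; exists e0 => //; exact: neg.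
move=> F' /[dup] pF' [fF' _].
have [a' [va' EF'']] := zs_face fF'.
have pz : proper_face (cone (PG G)) (coneX (zs G a')) by apply: proper_seteq EF'' pF'.
move/(proper_zs va'): pz => ex.
move=> k /(aff_seteq EF'') hk; apply: aff_seteq EF' _; rewrite zH.
apply: maxdim va' ex _ k hk.
by rewrite dim_WX bH.
Qed.
End Main.
Section Main2.
Variables (R : realFieldType) (n : nat).
Local Notation vec := 'rV[R]_n.
Local Notation rho := (@rho R n).
Local Notation VX := (@VX R n).
Local Notation WX := (@WX R n).
Local Notation coneX := (@coneX R n).
Local Notation vec_of := (@vec_of R n).
Local Notation sgv := (@sgv R n).
Local Notation zs := (@zs R n).
Implicit Types (X Y G H : {set edge n}) (u v w x y : AV n) (C D L : {set AV n}) (a b : vec).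

Lemma zsE G a e : (e \in zs G a) = (e \in G) && (dot a (rho e) == 0).
Proof. by rewrite in_set. Qed.

Lemma dimW_bound G a : (forall e, e \in G -> dot a (rho e) <= 0) ->
  (forall a', (forall e, e \in G -> dot a' (rho e) <= 0) ->
     (exists2 e, e \in G & dot a' (rho e) < 0) ->
     forall k, aff_indep_in (coneX (zs G a')) k -> aff_indep_in (coneX (zs G a)) k) ->
  (\dim (WX (zs G a)) <= (bicomp G).+1)%N.
Proof.
move=> va mx; set H := zs G a.
have aW : a \in WX H by apply/WXP => e; rewrite inE => /andP [_ /eqP].
rewrite leqNgt; apply/negP => big.
set U := (WX G + <[a]>)%VS.
have dU := dim_addline (WX G) a; rewrite (dim_WX R) in dU.
have : ~~ (WX H <= U)%VS.
  by apply/negP => /dimvS h; move: (leq_trans h dU); rewrite leqNgt big.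
move=> /subvPn [a' a'W a'U].
have a'G : a' \notin WX G by apply: contra a'U; apply: (subvP (addvSl _ _)).
have [e eG ne] : exists2 e, e \in G & dot a' (rho e) != 0.
  case: (boolP [exists e in G, dot a' (rho e) != 0]) => [/exists_inP [e eG ne]|/exists_inPn NE].
    by exists e.
  by move: a'G; have -> // : a' \in WX G; apply/WXP => e' e'G; apply/eqP; move: (NE e' e'G); rewrite negbK.
have [b [bW bU bpos]] : exists b, [/\ b \in WX H, b \notin U & 0 < dot b (rho e)].
  case: (ltrgtP 0 (dot a' (rho e))) => h.
  - by exists a'.
  - exists (- a'); split; rewrite ?memvN ?dotNl ?oppr_gt0 //.
  - by rewrite h eqxx in ne.
have [es /andP [esG esp] esmin] := @exists_min R _
  (fun e' => (e' \in G) && (0 < dot b (rho e'))) (fun e' => - dot a (rho e') / dot b (rho e'))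
  e (introT andP (conj eG bpos)).
have bH0 : forall e', e' \in H -> dot b (rho e') = 0 by exact/WXP.
have esH : es \notin H by apply/negP => /bH0 E; rewrite E ltxx in esp.
have esneg : dot a (rho es) < 0.
  rewrite lt_neqAle va // andbT; apply: contra esH => E; by rewrite inE esG E.
set t := - dot a (rho es) / dot b (rho es).
have tpos : 0 < t by rewrite divr_gt0 ?oppr_gt0.
set a2 := a + t *: b.
have da2 : forall z : vec, dot a2 z = dot a z + t * dot b z by move=> z; rewrite dotDl dotZl.
have va2 : forall e', e' \in G -> dot a2 (rho e') <= 0.
  move=> e' e'G; rewrite da2; case: (ltP 0 (dot b (rho e'))) => h.
    have := esmin e'; rewrite e'G h => /(_ isT); rewrite -/t => tle.
    by move: tle; rewrite ler_pdivlMr // => tle; lra.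
  have := va e' e'G; have : t * dot b (rho e') <= 0 by apply: mulr_ge0_le0 => //; exact: ltW.
  lra.
have a2es : dot a2 (rho es) = 0.
  rewrite da2 /t divfK ?subrr //; exact: lt0r_neq0.
have ex2 : exists2 e', e' \in G & dot a2 (rho e') < 0.
  case: (boolP [exists e' in G, dot a2 (rho e') != 0]) => [/exists_inP [e' e'G ne']|/exists_inPn NE].
    by exists e' => //; rewrite lt_neqAle ne' va2.
  have a2W : a2 \in WX G by apply/WXP => e' e'G; apply/eqP; move: (NE e' e'G); rewrite negbK.
  have : b \in U.
    have -> : b = t^-1 *: (a2 - a).
      by rewrite /a2 addrC addKr scalerA mulVf ?scale1r // lt0r_neq0.
    apply: memvZ; apply: memvB; first exact: (subvP (addvSl _ _)).
    by apply: (subvP (addvSr _ _)); exact: memv_line.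
  by rewrite (negbTE bU).
have hk := mx a2 va2 ex2 _ (proj2 (aff_coneX R _ _) (leqnn _)).
move/aff_coneX: hk; apply/negP; rewrite -ltnNge.
apply: (dim_lt (u := rho es)).
- apply: VX_sub; apply/subsetP => e'; rewrite !zsE => /andP [e'G /eqP E].
  have eH : e' \in H by rewrite /H zsE e'G E eqxx.
  by rewrite e'G /= da2 E (bH0 e' eH) mulr0 addr0.
- by apply: rho_VX; rewrite zsE esG a2es eqxx.
apply/negP => /(annP _ _ aW) E; by rewrite E ltxx in esneg.
Qed.
End Main2.
Section Main3.
Variables (R : realFieldType) (n : nat).
Local Notation vec := 'rV[R]_n.
Local Notation rho := (@rho R n).
Local Notation VX := (@VX R n).
Local Notation WX := (@WX R n).
Local Notation coneX := (@coneX R n).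
Local Notation vec_of := (@vec_of R n).
Local Notation sgv := (@sgv R n).
Local Notation zs := (@zs R n).
Local Notation ext := (@ext R n).
Local Notation sigma := (@sigma R n).
Implicit Types (X Y G H : {set edge n}) (u v w x y : AV n) (C D L : {set AV n}) (a b : vec).

Lemma augE_sub X Y : X \subset Y -> augE X \subset augE Y.
Proof.
move=> XY; apply/subsetP => t /augEP [e eX te]; apply/augEP; exists e => //.
exact: (subsetP XY).
Qed.

Lemma augV_sub X Y : X \subset Y -> augV X \subset augV Y.
Proof.
move=> XY; apply/subsetP => [[i|e]]; rewrite ?augV_inl // !augV_inr.
by move=> /andP [eX ->]; rewrite (subsetP XY e eX).
Qed.

Lemma adj_sub X Y : X \subset Y -> subrel (adj X) (adj Y).
Proof.
move=> XY u v /adjP [t tE H]; apply/adjP; exists t => //.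
exact: (subsetP (augE_sub XY)).
Qed.

Lemma sigma_pm L v : (sigma L v = 1) \/ (sigma L v = -1).
Proof. by rewrite /sigma; case: (v \in L); [right|left]. Qed.

Lemma sgv_notW G a C0 L0 : C0 \in comps (zs G a) -> bipartition (zs G a) C0 L0 ->
  sgv C0 L0 \in WX G -> is_comp_of G (zs G a) C0.
Proof.
set H := zs G a => C0H bL sW.
have aW : a \in WX H by apply/WXP => e; rewrite zsE => /andP [_ /eqP].
have HG : H \subset G by exact: zs_sub.
have L0C : L0 \subset C0 by case/andP: bL.
set s := sgv C0 L0.
have sin : forall i, inl i \in C0 -> s 0 i = sigma L0 (inl i) by move=> i; exact: sgv_in.
have sout : forall i, inl i \notin C0 -> s 0 i = 0 by move=> i; exact: sgv_out.
have cst : forall i j, inl i \in C0 -> inl j \in C0 ->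
    a 0 i * sigma L0 (inl i) = a 0 j * sigma L0 (inl j).
  by move=> i j iC jC; exact: (const_on_comp aW C0H bL iC jC).
have sW' := WXP _ _ sW.
have touch : forall e t, e \in G -> t \in aug_of e -> (t.1.2 \in C0) || (t.2 \in C0) -> e \in H.
  move=> e t eG te tC; rewrite /H zsE eG /=; apply/eqP.
  have := sW' e eG; rewrite dot_rho dot_rho.
  case: e eG te => [[[sg|] i] j] eG te /=.
  - move: te; rewrite inE => /eqP Et; rewrite Et /= in tC; clear Et.
    have E1 : (s 0 i + s 0 j = 0) -> a 0 i + a 0 j = 0.
      case iC: (inl i \in C0); case jC: (inl j \in C0); rewrite /= ?iC ?jC in tC => //.
      + have := cst i j iC jC; rewrite !sin //.
        by case: (sigma_pm L0 (inl i)) => ->; case: (sigma_pm L0 (inl j)) => ->; lra.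
      + rewrite (sin i) // (sout j) ?jC //; by case: (sigma_pm L0 (inl i)) => ->; lra.
      + rewrite (sout i) ?iC // (sin j) //; by case: (sigma_pm L0 (inl j)) => ->; lra.
    move: eG; case: sg => _; first by move=> /E1 ->.
    move=> h; have h' : s 0 i + s 0 j = 0 by lra.
    by rewrite (E1 h') oppr0.
  move: te; rewrite !inE => /orP [] /eqP Et; rewrite Et /= in tC.
  + move: tC => /orP [iC|eC].
    * case jC: (inl j \in C0).
      - have := cst i j iC jC; rewrite !sin //.
        by case: (sigma_pm L0 (inl i)) => ->; case: (sigma_pm L0 (inl j)) => ->; lra.
      - rewrite (sin i) // (sout j) ?jC //; by case: (sigma_pm L0 (inl i)) => ->; lra.
    * have := comps_sub C0H eC; rewrite augV_inr => /andP [eH _].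
      by move: eH; rewrite /H zsE dot_rho /= => /andP [_ /eqP ->].
  + move: tC => /orP [eC|jC].
    * have := comps_sub C0H eC; rewrite augV_inr => /andP [eH _].
      by move: eH; rewrite /H zsE dot_rho /= => /andP [_ /eqP ->].
    * case iC: (inl i \in C0).
      - have := cst i j iC jC; rewrite !sin //.
        by case: (sigma_pm L0 (inl i)) => ->; case: (sigma_pm L0 (inl j)) => ->; lra.
      - rewrite (sout i) ?iC // (sin j) //; by case: (sigma_pm L0 (inl j)) => ->; lra.
have Eed : edges_at G C0 = edges_at H C0.
  apply/setP => t; rewrite !inE; apply/idP/idP => /andP [tE tC]; rewrite tC andbT.
    move: tE => /augEP [e eG te]; apply/augEP; exists e => //; exact: touch te tC.
  exact: (subsetP (augE_sub HG)).
apply/andP; split; last by rewrite Eed.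
have [u uH Cu] := compsP _ _ C0H.
have uG : u \in augV G by exact: (subsetP (augV_sub HG)).
suff -> : C0 = Defs.comp G u by exact: comp_in_comps.
apply/setP => v; rewrite Cu !compE; apply/idP/idP => /andP [vV uv].
  rewrite (subsetP (augV_sub HG) _ vV) /=.
  by apply: connect_sub uv => x y /(adj_sub HG) /connect1.
have vC : v \in C0.
  have uC0 : u \in C0 by rewrite Cu; exact: comp_self.
  apply: (connect_closed (S := fun x => x \in C0) _ uC0 uv).
  move=> x y xC /adjP [t tE Hxy].
  have tC : (t.1.2 \in C0) || (t.2 \in C0).
    by case/orP: Hxy => /andP [/eqP E1 /eqP E2]; rewrite ?E1 ?E2 xC ?orbT.
  have : t \in edges_at H C0 by rewrite -Eed inE tE tC.
  rewrite inE => /andP [tH _].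
  by apply: comps_closed C0H xC _; apply/adjP; exists t.
by move: vC; rewrite Cu compE.
Qed.
End Main3.
Section Main4.
Variables (R : realFieldType) (n : nat).
Local Notation vec := 'rV[R]_n.
Local Notation rho := (@rho R n).
Local Notation VX := (@VX R n).
Local Notation WX := (@WX R n).
Local Notation coneX := (@coneX R n).
Local Notation vec_of := (@vec_of R n).
Local Notation sgv := (@sgv R n).
Local Notation zs := (@zs R n).
Local Notation sigma := (@sigma R n).
Implicit Types (X Y G H : {set edge n}) (u v w x y : AV n) (C D L : {set AV n}) (a b : vec).

Lemma sgv_swap C L : L \subset C -> sgv C (C :\: L) = - sgv C L.
Proof.
move=> LC; apply/rowP => i; rewrite [RHS]mxE !sgvE !inE.
case iL: (inl i \in L); case iC: (inl i \in C) => //=; rewrite ?opprK ?oppr0 //.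
by move: (subsetP LC _ iL); rewrite iC.
Qed.

Lemma cond2 G a : (forall e, e \in G -> dot a (rho e) <= 0) -> a \notin WX G ->
  \dim (WX (zs G a)) = (bicomp G).+1 ->
  forall C0, C0 \in comps (zs G a) -> bipartite (zs G a) C0 -> ~~ is_comp_of G (zs G a) C0 ->
  exists L, bipartition (zs G a) C0 L &&
     [forall e in G :\: zs G a, allowed_edge (proj L) (proj (C0 :\: L)) e].
Proof.
set H := zs G a => va aG dH C0 C0H /existsP [L0 bL] nC.
have aW : a \in WX H by apply/WXP => e; rewrite zsE => /andP [_ /eqP].
have HG : H \subset G by exact: zs_sub.
have L0C : L0 \subset C0 by case/andP: bL.
set s := sgv C0 L0.
have sH : s \in WX H by exact: sgv_W.
have sG : s \notin WX G by apply: contra nC; exact: sgv_notW.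
set U := (WX G + <[s]>)%VS.
have UH : (U <= WX H)%VS.
  by rewrite subv_add WX_sub //= -memvE.
have sU : s \in U by apply: (subvP (addvSr _ _)); exact: memv_line.
have dU : (\dim (WX G) < \dim U)%N by apply: dim_lt (addvSl _ _) sU sG.
have EU : U = WX H.
  apply/eqP; rewrite eqEdim UH /= dH -(dim_WX R); exact: dU.
have : a \in U by rewrite EU.
move=> /memv_addP [g gG [v /vlineP [c ->] Ea]].
have key : forall e, e \in G -> e \notin H -> c * dot s (rho e) < 0.
  move=> e eG eH.
  have : dot a (rho e) < 0.
    rewrite lt_neqAle va // andbT; apply: contra eH => E; by rewrite /H zsE eG E.
  by rewrite Ea dotDl dotZl (WXP _ _ gG e eG) add0r.
have c0 : c != 0.
  apply: contra aG => /eqP c0; by rewrite Ea c0 scale0r addr0.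
case: (ltrgtP 0 c) => hc; last by rewrite hc eqxx in c0.
- exists L0; rewrite bL /=; apply/forall_inP => e; rewrite inE => /andP [eH eG].
  rewrite (allowed_dot R) ?disj_proj //; have := key e eG eH.
  by rewrite pmulr_rlt0.
- exists (C0 :\: L0); rewrite bipartition_swap //=; apply/forall_inP => e.
  rewrite inE => /andP [eH eG].
  rewrite (allowed_dot R) ?disj_proj //; have := key e eG eH.
  rewrite nmulr_rlt0 // => h.
  have -> : vec_of (proj (C0 :\: L0)) (proj (C0 :\: (C0 :\: L0))) = - s by exact: sgv_swap.
  by rewrite dotNl oppr_lt0.
Qed.

Lemma subgraph_of_facet G (F : vec -> Prop) : facet (cone (PG G)) F ->
  exists H, facet_subgraph G H /\ seteq (cone (PG H)) F.
Proof.
move=> [pF mx].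
have [fF _] := pF.
have [a [va EF]] := zs_face fF.
set H := zs G a.
have pz : proper_face (cone (PG G)) (coneX H) by exact: proper_seteq EF pF.
have [e0 e0G lt0] := (proper_zs va).1 pz.
have aW : a \in WX H by apply/WXP => e; rewrite zsE => /andP [_ /eqP].
have aG : a \notin WX G by apply/negP => /WXP /(_ e0 e0G) E; rewrite E ltxx in lt0.
have HG : H \subset G by exact: zs_sub.
have dH : \dim (WX H) = (bicomp G).+1.
  apply/eqP; rewrite eqn_leq; apply/andP; split.
    apply: dimW_bound => // a' va' ex k hk.
    have pF' : proper_face (cone (PG G)) (coneX (zs G a')).
      by apply/(proper_zs va').
    have := mx _ pF' k hk.
    exact: aff_seteq.
  rewrite -(dim_WX R); apply: (dim_lt (u := a)) => //; exact: WX_sub.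
exists H; split; last first.
  by apply: seteq_trans (cone_coneX H) (seteq_sym EF).
apply/and3P; split => //.
  by rewrite -(dim_WX R) dH.
apply/forallP => C; apply/implyP => CH; apply/implyP => /andP [bC nC].
have [L HL] := cond2 va aG dH CH bC nC.
by apply/existsP; exists L.
Qed.
End Main4.

Theorem mainTheorem10 (R : realFieldType) (n : nat) (G : {set edge n})
  (HG : wf_graph G) (F : 'rV[R]_n -> Prop) :
  facet (cone (@PG R n G)) F <->
  exists H : {set edge n}, facet_subgraph G H /\ seteq (cone (@PG R n H)) F.
Proof.
split; first exact: subgraph_of_facet.
by move=> [H [fH EF]]; exact: facet_of_subgraph fH EF.
Qed.
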